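(* Let $G$ be a connected chordal graph with at least two vertices. A vertex $v\in V(G)$ is an $\mathcal{F}$-branch leaf of some BFS ordering of $G$ if and only if the radius of the induced subgraph $G[N_G(v)]$ is at most two.
   Context: Graphs are finite, simple, undirected; $N_G(v)$ is the open neighborhood of $v$. A graph is chordal if it has no induced cycle of length at least 4. The eccentricity of a vertex is its largest distance to any other vertex, and the radius of a graph is the smallest eccentricity of its vertices (infinite if the graph is disconnected). A vertex ordering of $G$ is a bijection $\sigma:\{1,\dots,n\}\to V(G)$; $u\prec_\sigma w$ means $u$ comes before $w$. BFS orderings are produced by the label search: initially all labels are $\emptyset$; for $i=1,\dots,n$ choose any unnumbered vertex $x$ such that there is no unnumbered $y$ with $\mathrm{label}(x)\prec\mathrm{label}(y)$, set $\sigma(i)=x$, and add $i$ to the labels of the unnumbered neighbors of $x$, where $A\prec B$ iff ($A=\emptyset$ and $B\neq\emptyset$) or $\min(A)>\min(B)$. The $\mathcal{F}$-tree of $\sigma$ is the spanning tree containing, for each $v\neq\sigma(1)$, the edge from $v$ to its leftmost neighbor in $\sigma$. A vertex $v\neq\sigma(1)$ that is a leaf of the $\mathcal{F}$-tree is an $\mathcal{F}$-branch leaf of $\sigma$. *)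

(* Defs.v *)
From mathcomp Require Import all_boot.
Set Implicit Arguments. Unset Strict Implicit. Unset Printing Implicit Defensive.

Section Graphs.
Variables (T : finType) (e : rel T).

Definition simple_graph : Prop := symmetric e /\ irreflexive e.

Definition connected_graph : Prop := forall x y : T, connect e x y.

Definition nbhd (v : T) : {set T} := [set w | e v w].

Definition induced_cycle (c : seq T) : Prop :=
  [/\ uniq c, 3 <= size c, cycle e c &
      forall x y, x \in c -> y \in c -> e x y -> (y == next c x) || (x == next c y)].

Definition chordal : Prop := forall c : seq T, induced_cycle c -> size c < 4.

(* Radius of the induced subgraph G[S] is at most k: some u in S has
   eccentricity at most k in G[S], i.e. every w in S is reached from u by a
   walk of length <= k all of whose vertices lie in S.  (A disconnected G[S]
   has infinite radius, which is never <= k; this is automatic here.) *)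
Definition radius_le (S : {set T}) (k : nat) : Prop :=
  exists2 u, u \in S &
    forall w, w \in S -> exists p : seq T,
      [/\ path e u p, last u p = w, all (mem S) p & size p <= k].

(* Vertex orderings: sigma is represented by the sequence
   s = [:: sigma(1); ...; sigma(n)] (a duplicate-free enumeration of T);
   position j (0-based) in s corresponds to number j+1. *)
Definition vertex_ordering (s : seq T) : Prop := uniq s /\ forall x, x \in s.

(* label of vertex x after steps 1..i have been performed (0-based: the
   numbers are the positions j < i), listed increasingly; valid as long as x is
   unnumbered. *)
Definition label (s : seq T) (i : nat) (x : T) : seq nat :=
  [seq j <- iota 0 i | e (nth x s j) x].

(* A ≺ B  iff  (A = ∅ and B ≠ ∅) or min A > min B  (labels are increasing
   lists, so min = head). *)
Definition label_prec (A B : seq nat) : bool :=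
  match A, B with
  | [::], _ :: _ => true
  | a :: _, b :: _ => b < a
  | _, _ => false
  end.

Definition bfs_ordering (s : seq T) : Prop :=
  vertex_ordering s /\
  forall i, i < size s -> forall y, i <= index y s ->
    ~~ label_prec (label s i (nth y s i)) (label s i y).

Definition leftmost_nbr (s : seq T) (v : T) : T := nth v s (find (e v) s).

Definition ftree_edge (s : seq T) (v w : T) : bool :=
  ((v != head v s) && (leftmost_nbr s v == w)) ||
  ((w != head w s) && (leftmost_nbr s w == v)).

Definition F_branch_leaf (s : seq T) (v : T) : Prop :=
  v != head v s /\ #|[set w | ftree_edge s v w]| = 1.

End Graphs.

(* Main.v *)
Require Import Defs.
From mathcomp Require Import all_boot.
From Stdlib Require Import Classical_Prop.
From mathcomp Require Import zify.
Set Implicit Arguments. Unset Strict Implicit. Unset Printing Implicit Defensive.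


Section Hole.
Variables (T : finType) (e : rel T).
Hypotheses (esym : symmetric e) (eirr : irreflexive e) (ech : chordal e).

Lemma notuniq_split (q : seq T) : ~~ uniq q ->
  exists q1 z q2 q3, q = q1 ++ z :: q2 ++ z :: q3.
Proof.
elim: q => // y s IH /=; rewrite negb_and negbK; case ys: (y \in s) => /= ns.
  case/splitPr: ys => p1 p2; by exists [::], y, p1, p2.
have [q1 [z [q2 [q3 ->]]]] := IH ns; by exists (y :: q1), z, q2, q3.
Qed.

Lemma pair_split (q : seq T) u w : u \in q -> w \in q -> u != w ->
  exists q1 q2 q3, q = q1 ++ u :: q2 ++ w :: q3 \/ q = q1 ++ w :: q2 ++ u :: q3.
Proof.
case/splitPr => q1 r; rewrite mem_cat inE => /orP[|/orP[/eqP->|]].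
- case/splitPr=> l1 l2 _; exists l1, l2, r; right; by rewrite -catA.
- by rewrite eqxx.
- case/splitPr=> r1 r2 _; exists q1, r1, r2; by left.
Qed.

Lemma next_mid (c c1 c2 : seq T) u w : uniq c -> c = c1 ++ u :: w :: c2 -> next c u = w.
Proof.
move=> uc Ec; rewrite next_nth; have uc' := uc; rewrite Ec in uc'.
have uin : u \in c by rewrite Ec mem_cat inE eqxx orbT.
rewrite uin; move: uc'; rewrite cat_uniq /= => /and3P[_ /norP[un1 _] _].
have ->: index u c = size c1 by rewrite Ec index_cat (negbTE un1) /= eqxx addn0.
clear un1; case: c Ec {uc uin} => [|y c'] Ec; first by case: c1 Ec.
have -> : nth y c' (size c1) = nth y (y :: c') (size c1).+1 by [].
by rewrite Ec nth_cat ltnNge leqnSn /= subSn // subnn.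
Qed.

Lemma next_last (c c1 : seq T) b y : uniq c -> c = rcons c1 b -> head y c = y -> next c b = y.
Proof.
move=> uc Ec hy; rewrite next_nth; have uc' := uc; rewrite Ec in uc'.
have bin : b \in c by rewrite Ec mem_rcons inE eqxx.
rewrite bin; move: uc'; rewrite rcons_uniq => /andP[bn _].
have ->: index b c = size c1 by rewrite Ec -cats1 index_cat (negbTE bn) /= eqxx addn0.
clear bn.
case: c Ec hy {uc bin} => [|y' c'] Ec /= hy; first by case: c1 Ec.
subst y'; rewrite nth_default //.
have := congr1 size Ec; rewrite size_rcons /= => [[->]]; exact: leqnn.
Qed.

Lemma hole_gen (x : T) n (q : seq T) : size q <= n -> sorted e q ->
  e x (head x q) -> e x (last x q) -> head x q != last x q ->
  ~~ e (head x q) (last x q) -> x \notin q ->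
  (forall z, z \in q -> z != head x q -> z != last x q -> ~~ e x z) -> False.
Proof.
elim: n q => [|n IH] q.
  by rewrite leqn0 => /nilP -> /=; rewrite eqxx.
move=> sq qs exa exb ab nab xq int.
have shortP : forall q', sorted e q' -> size q' < size q -> head x q' = head x q ->
   last x q' = last x q -> {subset q' <= q} -> False.
  move=> q' s' sz' h' l' sub'; apply: (IH q') => //; rewrite ?h' ?l' //.
  - by rewrite -ltnS (leq_trans sz').
  - by apply: contra xq; apply: sub'.
  - by move=> z /sub' zq; apply: int.
case uq: (uniq q); last first.
  have [q1 [z [q2 [q3 Eq]]]] := notuniq_split (negbT uq).
  apply: (shortP (q1 ++ z :: q3)).
  - move: qs; rewrite Eq !sorted_cat_cons cat_path /= => /andP[-> /andP[_ /andP[_ ->]]].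
    by [].
  - rewrite Eq !size_cat /= size_cat /=; lia.
  - by rewrite Eq; case: q1 {Eq}.
  - by rewrite Eq !last_cat /= last_cat.
  - by move=> y; rewrite Eq !mem_cat !inE mem_cat inE => /orP[->|/orP[->|->]]; rewrite ?orbT.
case: (classic (exists q1 u q2 w q3, q = q1 ++ u :: q2 ++ w :: q3 /\ q2 != [::] /\ e u w)).
  move=> [q1 [u [q2 [w [q3 [Eq [q2n euw]]]]]]].
  apply: (shortP (q1 ++ u :: w :: q3)).
  - move: qs; rewrite Eq !sorted_cat_cons cat_path /= => /andP[-> /andP[_ /andP[_ ->]]].
    by rewrite euw.
  - rewrite Eq !size_cat /= size_cat /=.
    by case: q2 q2n {Eq} => // ? ? _ /=; lia.
  - by rewrite Eq; case: q1 {Eq}.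
  - by rewrite Eq !last_cat /= last_cat.
  - by move=> y; rewrite Eq !mem_cat !inE mem_cat inE => /orP[->|/orP[->|/orP[->|->]]]; rewrite ?orbT.
move=> nochord; clear shortP IH.
have : size (x :: q) < 4.
  apply: ech; split.
  - by rewrite /= xq uq.
  - by case: q {sq qs exa exb nab xq int uq nochord} ab => [|a [|b q]] //=; rewrite eqxx.
  - rewrite /cycle rcons_path (esym (last x q)) exb andbT.
    by case: q {sq exb ab nab xq int uq nochord} qs exa => [|a q] //= -> ->.
  - have ucx : uniq (x :: q) by rewrite /= xq uq.
    have nonq : q != [::] by case: q ab {sq exa nab xq int uq nochord qs exb ucx} => //=; rewrite eqxx.
    have hnext : next (x :: q) x = head x q.
      by case: q nonq ucx {sq exa ab nab xq int uq nochord qs exb} => [|a q] // _ ucx; exact: (next_mid (c1 := [::]) (c2 := q) ucx).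
    have lnext : next (x :: q) (last x q) = x.
      apply: (next_last (c1 := belast x q)) => //.
      by rewrite -lastI.
    have key : forall u w, u \in q -> w \in q -> e u w -> (w == next (x :: q) u) || (u == next (x :: q) w).
      move=> u w uq' wq' euw.
      have uw : u != w by apply: contraTneq euw => ->; rewrite eirr.
      have [q1 [q2 [q3 [Eq|Eq]]]] := pair_split uq' wq' uw.
      + case: q2 Eq => [|z q2] Eq.
          by rewrite (next_mid (c1 := x :: q1) (c2 := q3) (u := u) (w := w) ucx) ?eqxx // Eq.
        by case: nochord; exists q1, u, (z :: q2), w, q3.
      + case: q2 Eq => [|z q2] Eq.
          by rewrite (next_mid (c1 := x :: q1) (c2 := q3) (u := w) (w := u) ucx) ?eqxx ?orbT // Eq.
        by case: nochord; exists q1, w, (z :: q2), u, q3; rewrite esym.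
    move=> u w; rewrite !inE => /orP[/eqP->|uq'] /orP[/eqP->|wq'].
    + by rewrite eirr.
    + move=> exw; case: (w =P head x q) => [->|/eqP wh]; first by rewrite hnext eqxx.
      case: (w =P last x q) => [->|/eqP wl]; first by rewrite lnext eqxx orbT.
      by move: (int w wq' wh wl); rewrite exw.
    + move=> eux; case: (u =P head x q) => [->|/eqP uh]; first by rewrite hnext eqxx orbT.
      case: (u =P last x q) => [->|/eqP ul]; first by rewrite lnext eqxx.
      by move: (int u uq' uh ul); rewrite esym eux.
    + exact: key.
case: q {sq exa xq int uq nochord exb} qs ab nab => [|a [|b [|c q]]] //=; rewrite ?eqxx //.
by rewrite andbT => ->.
Qed.

End Hole.

Section Dist.
Variables (T : finType) (e : rel T) (r : T).
Hypotheses (esym : symmetric e) (eirr : irreflexive e) (conn : forall y, connect e r y).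

Definition dP (x : T) (n : nat) : bool :=
  [exists t : n.-tuple T, path e r t && (last r t == x)].

Lemma dP_ex x : exists n, dP x n.
Proof.
have /connectP [p pp lp] := conn x.
exists (size p); apply/existsP; exists (in_tuple p); by rewrite /= pp lp eqxx.
Qed.

Definition dist x := ex_minn (dP_ex x).

Lemma dist_path x t : path e r t -> last r t = x -> dist x <= size t.
Proof.
move=> pt lt; rewrite /dist; case: ex_minnP => m _ H; apply: H.
apply/existsP; exists (in_tuple t); by rewrite /= pt lt eqxx.
Qed.

Lemma dist_spec x : exists t, [/\ path e r t, last r t = x & size t = dist x].
Proof.
rewrite /dist; case: ex_minnP => m /existsP [t /andP [pt /eqP lt]] _.
by exists t; rewrite size_tuple.
Qed.

Lemma dist_r : dist r = 0.
Proof. by apply/eqP; rewrite -leqn0; apply: (dist_path (t := [::])). Qed.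

Lemma dist_eq0 x : dist x = 0 -> x = r.
Proof. by have [t [_ <- st]] := dist_spec x; move=> d0; move: st; rewrite d0 => /size0nil ->. Qed.

Lemma distE x y : e x y -> dist y <= (dist x).+1.
Proof.
move=> exy; have [t [pt lt st]] := dist_spec x.
rewrite -st -(size_rcons t y); apply: dist_path; last by rewrite last_rcons.
by rewrite rcons_path pt lt exy.
Qed.

Lemma distP x : x != r -> exists z, e z x /\ (dist z).+1 = dist x.
Proof.
move=> xr; have [t [pt lt st]] := dist_spec x.
case/lastP: t pt lt st => [|t z] pt lt st; first by move: xr; rewrite -lt eqxx.
move: pt; rewrite rcons_path => /andP [pt ez]; rewrite last_rcons in lt; subst z.
exists (last r t); split => //; apply/eqP; rewrite eqn_leq; apply/andP; split.
  by rewrite -st size_rcons ltnS; apply: dist_path.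
exact: distE.
Qed.

Definition er k := [rel u w | e u w && (dist u <= k) && (dist w <= k)].

Lemma er_sym k : symmetric (er k).
Proof. by move=> u w /=; rewrite esym -!andbA; congr (_ && _); rewrite andbC. Qed.

Lemma reg_conn k z : dist z <= k -> connect (er k) r z.
Proof.
have: forall n z, dist z = n -> dist z <= k -> connect (er k) r z; last by move=> H; exact: H.
elim=> [|n IH] {}z dzn dk; first by rewrite (dist_eq0 dzn); apply: connect0.
have zr : z != r by apply/eqP => zr; move: dzn; rewrite zr dist_r.
have [z' [ez dz']] := distP zr.
apply: (connect_trans (y := z')); first by apply: IH; lia.
apply: connect1 => /=; rewrite ez dk andbT /=; lia.
Qed.

Lemma er_path_all k u p : path (er k) u p -> forall z, z \in p -> dist z <= k.
Proof.
elim: p u => // z0 p IH u /= /andP [/andP [_ d0] pp] z.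
rewrite inE => /orP [/eqP -> //|zp]; exact: (IH z0 pp z zp).
Qed.

Lemma er_sub k : subrel (er k) e.
Proof. by move=> u w /= /andP [/andP [-> _] _]. Qed.

Hypothesis ech : chordal e.

Lemma region_hole k x y a b : dist a = k.+1 -> dist b = k.+1 -> k.+2 <= dist x ->
  k.+2 <= dist y -> e x a -> e y b -> a != b ->
  (x = y /\ ~~ e a b) \/ [/\ x != y, e x y, ~~ e x b & ~~ e y a] -> False.
Proof.
move=> da db dx dy exa eyb ab H.
have ar : a != r by apply/eqP => ar; move: da; rewrite ar dist_r.
have br : b != r by apply/eqP => br; move: db; rewrite br dist_r.
have [a' [ea' da']] := distP ar; have [b' [eb' db']] := distP br.
move: da' db'; rewrite da db => /eqP; rewrite eqSS => /eqP da' /eqP; rewrite eqSS => /eqP db'.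
have : connect (er k) a' b'.
  apply: (connect_trans (y := r)); last by apply: reg_conn; rewrite db'.
  by rewrite (sym_connect_sym (@er_sym k)); apply: reg_conn; rewrite da'.
case/connectP => mid pmid lmid.
have dmid : forall z, z \in a' :: mid -> dist z <= k.
  move=> z; rewrite inE => /orP [/eqP ->|zm]; [by rewrite da'|exact: (er_path_all pmid zm)].
have emid := sub_path (@er_sub k) pmid.
have nadj : forall z, dist z <= k -> ~~ e x z.
  move=> z dz; apply/negP => exz; have := @distE z x; rewrite (esym z x) exz => /(_ isT) h.
  by move: dx; rewrite leqNgt ltnS (leq_trans h).
have xa : x != a by apply/eqP => xa; move: dx; rewrite xa da ltnn.
have xb : x != b by apply/eqP => xb; move: dx; rewrite xb db ltnn.
have xmid : x \notin a' :: mid by apply/negP => /dmid; rewrite leqNgt (leq_trans _ dx).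
case: H => [[xy nab]|[xy exy nxb nya]].
  subst y.
  apply: (@hole_gen _ e esym eirr ech x _ (a :: (a' :: mid) ++ [:: b]) (leqnn _)).
  - by rewrite /= cat_path -lmid /= (esym a) ea' emid eb'.
  - by [].
  - by rewrite /= last_cat.
  - by rewrite /= last_cat.
  - by rewrite /= last_cat.
  - by rewrite in_cons (negbTE xa) orFb mem_cat negb_or xmid inE.
  - move=> z; rewrite in_cons mem_cat mem_seq1 => /orP [/eqP-> |/orP [zm|/eqP->]].
    + by rewrite eqxx.
    + by move=> _ _; exact: nadj (dmid z zm).
    + by move=> _; rewrite /= last_cat /= eqxx.
have ay : a != y by apply/eqP => ay; move: dy; rewrite -ay da ltnn.
apply: (@hole_gen _ e esym eirr ech x _ (a :: (a' :: mid) ++ [:: b; y]) (leqnn _)).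
- by rewrite /= cat_path -lmid /= (esym a) ea' emid eb' (esym b y) eyb.
- by [].
- by rewrite /= last_cat.
- by rewrite /= last_cat.
- by rewrite /= last_cat (esym a y).
- by rewrite in_cons (negbTE xa) orFb mem_cat negb_or xmid /= !inE (negbTE xb) (negbTE xy).
- move=> z; rewrite in_cons mem_cat => /orP [/eqP-> |/orP [zm|]]; last by rewrite !inE => /orP [/eqP->|/eqP->]; [move=> _ _|move=> _; rewrite /= last_cat /= eqxx].
  + by rewrite eqxx.
  + by move=> _ _; exact: nadj (dmid z zm).
Qed.

Lemma clique x a b : e x a -> e x b -> a != b -> dist a = dist b ->
  (dist a).+1 = dist x -> e a b.
Proof.
move=> exa exb ab dab dax; apply/negPn/negP => nab.
case da: (dist a) dax dab => [|k] dax dab.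
  by move: ab; rewrite (dist_eq0 da) (dist_eq0 (Logic.eq_sym dab)) eqxx.
apply: (@region_hole k x x a b) => //; rewrite -?dab -?dax //; by left.
Qed.

Lemma cmp x y a b : e x y -> dist x = dist y -> e x a -> e y b -> dist a = dist b ->
  (dist a).+1 = dist x -> ~~ e x b -> ~~ e y a -> False.
Proof.
move=> exy dxy exa eyb dab dax nxb nya.
have ab : a != b by apply: contraNneq nxb => <-.
case da: (dist a) dax dab => [|k] dax dab.
  by move: ab; rewrite (dist_eq0 da) (dist_eq0 (Logic.eq_sym dab)) eqxx.
apply: (@region_hole k x y a b) => //; rewrite -?dab -?dxy -?dax //.
right; split => //; by apply: contraTneq exy => ->; rewrite eirr.
Qed.

End Dist.

Lemma find_le (T : eqType) (a : pred T) (s : seq T) x0 k :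
  k < size s -> a (nth x0 s k) -> find a s <= k.
Proof. by move=> ks ak; rewrite leqNgt; apply/negP => /(before_find x0); rewrite ak. Qed.

Lemma crossing (T : Type) (e : rel T) (P : pred T) u0 p :
  path e u0 p -> P u0 -> ~~ P (last u0 p) -> exists u w, [/\ P u, ~~ P w & e u w].
Proof.
elim: p u0 => [|w p IH] u0 /=; first by move=> _ ->.
move=> /andP [euw pp] Pu; case Pw: (P w); first exact: IH.
by move=> _; exists u0, w; rewrite Pw.
Qed.

Section BFS.
Variables (T : finType) (e : rel T) (x0 : T) (s : seq T).
Hypotheses (esym : symmetric e) (eirr : irreflexive e)
  (conn : connected_graph e) (bfs : bfs_ordering e s).

Let r := head x0 s.
Local Notation f x := (find (e x) s).
Local Notation idx x := (index x s).

Lemma s_all x : x \in s. Proof. by case: bfs => [[_ ->]]. Qed.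
Lemma s_uniq : uniq s. Proof. by case: bfs => [[->]]. Qed.
Lemma idx_lt x : idx x < size s. Proof. by rewrite index_mem s_all. Qed.
Lemma nth_idx y x : nth y s (idx x) = x. Proof. by rewrite nth_index ?s_all. Qed.
Lemma idx_nth y i : i < size s -> idx (nth y s i) = i.
Proof. by move=> lt; rewrite index_uniq ?s_uniq. Qed.

Lemma idx_r : idx r = 0.
Proof. by rewrite /r; case: s (s_all x0) => //= y s' _; rewrite eqxx. Qed.

Lemma idx_pos x : x != r -> 0 < idx x.
Proof.
move=> xr; rewrite lt0n; apply: contra xr => /eqP i0.
by rewrite -(nth_idx x0 x) i0 /r; case: s.
Qed.

Lemma label_nil i y : i <= f y -> label e s i y = [::].
Proof.
move=> iy; rewrite /label (@eq_in_filter _ _ pred0) ?filter_pred0 // => j.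
rewrite mem_iota add0n => /andP [_ ji] /=; rewrite esym.
by apply: before_find; apply: leq_trans ji iy.
Qed.

Lemma label_cons i y : f y < i -> i <= size s -> exists l, label e s i y = f y :: l.
Proof.
move=> fi isz; rewrite /label -(subnKC (ltnW fi)) iotaD filter_cat.
rewrite (@eq_in_filter _ _ pred0 (iota 0 (f y))) ?filter_pred0 /=; last first.
  move=> j; rewrite mem_iota add0n => /andP [_ ji] /=; rewrite esym.
  exact: before_find.
case E: (i - f y) => [|k]; first by move: fi; rewrite -subn_gt0 E.
rewrite /= add0n esym nth_find; first by eexists.
by rewrite has_find; apply: leq_trans fi isz.
Qed.

Lemma bfs_at x y : idx x <= idx y ->
  ~~ label_prec (label e s (idx x) x) (label e s (idx x) y).
Proof.
move=> xy; case: bfs => _ H; have := H (idx x) (idx_lt x) y.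
by rewrite (nth_idx y x); apply.
Qed.

Lemma F1 x : x != r -> f x < idx x.
Proof.
move=> xr; rewrite ltnNge; apply/negP => xf.
have Hall : forall y, idx x <= idx y -> idx x <= f y.
  move=> y xy; have := bfs_at xy; rewrite (label_nil xf).
  rewrite leqNgt; apply: contraL => fy.
  have [l ->] := label_cons fy (ltnW (idx_lt x)); by [].
have /connectP [p pp lp] := conn r x.
have lnP : ~~ (idx (last r p) < idx x) by rewrite -lp ltnn.
have rP : idx r < idx x by rewrite idx_r idx_pos.
have [u [w [uP wP euw]]] := crossing (P := fun z => idx z < idx x) pp rP lnP.
move: wP; rewrite -leqNgt => /Hall h.
have : f w <= idx u by apply: (@find_le _ _ _ x0); rewrite ?idx_lt // nth_idx esym.
by move=> h2; move: (leq_trans h h2); rewrite leqNgt uP.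
Qed.

Lemma F2 x y : x != r -> idx x < idx y -> f x <= f y.
Proof.
move=> xr xy; have := bfs_at (ltnW xy).
have [l ->] := label_cons (F1 xr) (ltnW (idx_lt x)).
case: (ltnP (f y) (idx x)) => [fy|fy]; last by move=> _; apply: leq_trans (ltnW (F1 xr)) fy.
have [l' ->] := label_cons fy (ltnW (idx_lt x)); by rewrite /= -leqNgt.
Qed.

Lemma f_lt_size x : x != r -> f x < size s.
Proof. by move=> xr; apply: ltn_trans (F1 xr) (idx_lt x). Qed.

Lemma e_par x : x != r -> e x (nth x0 s (f x)).
Proof. move=> xr; apply: nth_find; by rewrite has_find f_lt_size. Qed.

Lemma idx_par x : x != r -> idx (nth x0 s (f x)) = f x.
Proof. by move=> xr; rewrite idx_nth // f_lt_size. Qed.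

Let conn_r : forall y, connect e r y. Proof. by move=> y; apply: conn. Qed.
Local Notation d := (dist conn_r).

Lemma dist_neq_r x : 0 < d x -> x != r.
Proof. by apply: contraTneq => ->; rewrite dist_r. Qed.

Lemma D1 k : forall x y, d x < k <= d y -> idx x < idx y.
Proof.
elim: k => [|k IH] x y; first by [].
case/andP => dx dy.
case: (ltnP (d x) k) => [dxk|dxk].
  by apply: IH; rewrite dxk /= ltnW.
have dxe : d x = k by apply/eqP; rewrite eqn_leq dxk andbT -ltnS.
case: k IH dxk dy dxe dx => [|k] IH _ dy dxe dx.
  have -> : x = r by apply: dist_eq0 dxe.
  rewrite idx_r idx_pos //; apply: dist_neq_r; exact: leq_trans dy.
rewrite ltnNge; apply/negP => yx.
have xr : x != r by apply: dist_neq_r; rewrite dxe.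
have yr : y != r by apply: dist_neq_r; apply: leq_trans dy.
have xy : x != y by apply/eqP => xy; move: dy; rewrite -xy dxe ltnn.
have yx' : idx y < idx x.
  rewrite ltn_neqAle yx andbT; apply: contra xy => /eqP h.
  by rewrite -(nth_idx x0 x) -h nth_idx.
have [z [ezx dz]] := distP conn_r xr.
have zy : idx z < idx y by apply: IH; rewrite dz dxe ltnSn /= ltnW.
have fxz : f x <= idx z by apply: (@find_le _ _ _ x0); rewrite ?idx_lt // nth_idx esym.
set y' := nth x0 s (f y).
have eyy' := e_par yr.
have dy' : k.+1 <= d y'.
  have := @distE _ e r conn_r y' y; rewrite esym eyy' => /(_ isT).
  move=> h2; rewrite -ltnS; exact: leq_trans dy h2.
have zy' : idx z < idx y' by apply: IH; rewrite dz dxe ltnSn.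
rewrite /y' idx_par // in zy'.
by have := F2 yr yx'; rewrite leqNgt (leq_ltn_trans fxz zy').
Qed.

Lemma D1' x y : d x < d y -> idx x < idx y.
Proof. by move=> h; apply: (@D1 (d y)); rewrite h leqnn. Qed.

Lemma D2 x : x != r -> (d (nth x0 s (f x))).+1 = d x.
Proof.
move=> xr; have [z [ezx dz]] := distP conn_r xr.
set p := nth x0 s (f x).
have fxz : f x <= idx z by apply: (@find_le _ _ _ x0); rewrite ?idx_lt // nth_idx esym.
have dpz : d p <= d z.
  rewrite leqNgt; apply/negP => /D1'; rewrite /p idx_par // => h.
  by move: (leq_ltn_trans fxz h); rewrite ltnn.
have dxp : d x <= (d p).+1.
  by apply: (@distE _ e r conn_r p x); rewrite esym e_par.
apply/eqP; rewrite eqn_leq dxp andbT; by rewrite -dz ltnS.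
Qed.

Hypothesis ech : chordal e.

Lemma fwd v : v != r -> (forall w, w != r -> nth w s (f w) != v) ->
  radius_le e (nbhd e v) 2.
Proof.
move=> vr leaf.
set p := nth x0 s (f v).
have evp : e v p := e_par vr.
have dpv : (d p).+1 = d v := D2 vr.
have idxp : idx p = f v := idx_par vr.
have fv : f v < idx v := F1 vr.
have cl := @clique _ e r esym eirr conn_r ech.
have cm := @cmp _ e r esym eirr conn_r ech.
have claim : forall w, e v w -> w != p -> e p w \/ exists b, [/\ e v b, e p b & e b w].
  move=> w evw wp.
  have dwv : d w <= (d v).+1 by apply: (@distE _ e r conn_r v w).
  have dvw : d v <= (d w).+1 by apply: (@distE _ e r conn_r w v); rewrite esym.
  case: (ltngtP (d w) (d v)) => [lt|gt|eq].
  - left; apply: (cl v) => //; first by rewrite eq_sym.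
    apply/eqP; rewrite -eqSS dpv eqn_leq dvw /=; exact: lt.
  -
    have dw1 : d w = (d v).+1 by apply/eqP; rewrite eqn_leq dwv gt.
    have vw : idx v < idx w by apply: D1'; rewrite dw1.
    have wr : w != r by apply: dist_neq_r; rewrite dw1.
    set q := nth x0 s (f w).
    have ewq : e w q := e_par wr.
    have idxq : idx q = f w := idx_par wr.
    have fwv : f w <= idx v by apply: (@find_le _ _ _ x0); rewrite ?idx_lt // nth_idx esym.
    have fwv' : f w != idx v.
      apply: contra (leaf w wr) => /eqP h.
      by rewrite h nth_idx.
    have qv_lt : idx q < idx v by rewrite idxq ltn_neqAle fwv' fwv.
    have dq : (d q).+1 = d w := D2 wr.
    have dqv : d q = d v by apply/eqP; rewrite -eqSS dq dw1.
    have qv : q != v by apply: contraTneq qv_lt => ->; rewrite ltnn.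
    have eqv : e q v by apply: (cl w) => //; rewrite (esym w v).
    have qr : q != r by apply: dist_neq_r; rewrite dqv -dpv.
    have epq : e p q.
      apply/negPn/negP => npq.
      set c := nth x0 s (f q).
      have eqc : e q c := e_par qr.
      have dc : (d c).+1 = d q := D2 qr.
      have nvc : ~~ e v c.
        apply/negP => evc.
        have h1 : f v <= f q.
          rewrite -(idx_par qr); apply: (@find_le _ _ _ x0); rewrite ?idx_lt // nth_idx; exact: evc.
        have h2 : f q <= f v := F2 qr qv_lt.
        have : f q = f v by apply/eqP; rewrite eqn_leq h1 h2.
        move=> h; move: npq; rewrite /c /p -h esym; by rewrite eqc.
      apply: (cm v q p c) => //.
      + by rewrite esym.
      + by apply/eqP; rewrite -eqSS dpv dc dqv.
      + by rewrite esym.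
    right; exists q; split => //; by rewrite esym.
  -
    have wr : w != r by apply: dist_neq_r; rewrite eq -dpv.
    set c := nth x0 s (f w).
    have ewc : e w c := e_par wr.
    have dc : (d c).+1 = d w := D2 wr.
    case epw : (e p w); first by left.
    right.
    have evc : e v c.
      apply/negPn/negP => nvc.
      apply: (cm v w p c) => //.
      + by apply/eqP; rewrite -eqSS dpv dc eq.
      + by rewrite esym epw.
    have pc : p != c by apply: contraTneq ewc => <-; rewrite esym epw.
    exists c; split => //.
    apply: (cl v) => //; apply/eqP; rewrite -eqSS dpv dc eq //.
    by rewrite esym.
exists p; first by rewrite inE.
move=> w; rewrite inE => evw.
case: (w =P p) => [->|/eqP wp]; first by exists [::].
case: (claim w evw wp) => [epw|[b [evb epb ebw]]].
  by exists [:: w]; rewrite /= epw !inE evw.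
by exists [:: b; w]; rewrite /= epb ebw !inE evb evw.
Qed.

Lemma leaf_of_card v : v != r -> #|[set w | ftree_edge e s v w]| = 1 ->
  forall w, w != r -> nth w s (f w) != v.
Proof.
move=> vr /eqP/cards1P [z Ez] w wr; apply/negP => /eqP hw.
have hd : forall a, head a s = r by move=> a; rewrite /r; case: s (s_all x0).
set p := nth x0 s (f v).
have pin : p \in [set w | ftree_edge e s v w].
  by rewrite inE /ftree_edge /leftmost_nbr hd vr (set_nth_default x0 v (f_lt_size vr)) eqxx.
have win : w \in [set w | ftree_edge e s v w].
  by rewrite inE /ftree_edge /leftmost_nbr !hd wr hw eqxx orbT.
rewrite Ez !inE in pin win; move/eqP: pin => pz; move/eqP: win => wz.
have wp : w = p by rewrite wz pz.
have pr : p != r by rewrite -wp.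
have h1 := F1 pr; have h2 := F1 vr; rewrite (idx_par vr) in h1.
have : idx v = f w by rewrite -hw idx_nth // f_lt_size.
rewrite wp => h; move: (ltn_trans h1 h2); by rewrite h ltnn.
Qed.

End BFS.

Section Cons.
Variables (T : finType) (e : rel T).

Definition vp (p : seq T) := uniq p /\ forall i, i < size p -> forall y, y \notin take i p ->
  ~~ label_prec (label e p i (nth y p i)) (label e p i y).

Lemma label_cat p q i x : i <= size p -> label e (p ++ q) i x = label e p i x.
Proof.
move=> ip; apply: eq_in_filter => j; rewrite mem_iota add0n => /andP [_ ji].
by rewrite nth_cat (leq_trans ji ip).
Qed.

Lemma vp_bfs s : vp s -> (forall x, x \in s) -> bfs_ordering e s.
Proof.
move=> [us H] alls; split; first by split.
move=> i isz y iy; apply: H => //; apply/negP => yt.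
have : index y s < i.
  rewrite -(cat_take_drop i s) index_cat yt.
  by apply: leq_trans (_ : size (take i s) <= i); rewrite ?index_mem // size_take; case: ltnP.
by rewrite ltnNge iy.
Qed.

Lemma vp_rcons p y : vp p -> y \notin p ->
  (forall y', y' \notin p -> ~~ label_prec (label e p (size p) y) (label e p (size p) y')) ->
  vp (rcons p y).
Proof.
move=> [up H] yp Hmax; split; first by rewrite rcons_uniq yp up.
move=> i; rewrite size_rcons ltnS leq_eqVlt => /orP [/eqP ->|ip] z.
  rewrite -cats1 take_size_cat // nth_cat ltnn subnn /= !label_cat //.
  exact: Hmax.
rewrite -cats1 take_cat ip nth_cat ip !label_cat ?(ltnW ip) //.
exact: H.
Qed.

Definition key n (L : seq nat) := if L is a :: _ then (n - a).+1 else 0.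

Lemma label_lt p i x j : j \in label e p i x -> j < i.
Proof. by rewrite mem_filter mem_iota add0n => /andP [_ /andP [_ ->]]. Qed.

Lemma key_prec p y y' : label_prec (label e p (size p) y) (label e p (size p) y') ->
  key (size p) (label e p (size p) y) < key (size p) (label e p (size p) y').
Proof.
have := @label_lt p (size p) y; have := @label_lt p (size p) y'.
case: (label e p (size p) y) => [|a l]; case: (label e p (size p) y') => [|b l'] //= hb ha.
have : a < size p by apply: ha; rewrite inE eqxx.
have : b < size p by apply: hb; rewrite inE eqxx.
move=> bs as_ ba; rewrite ltnS; lia.
Qed.

Lemma vp_ext n p : #|T| - size p <= n -> vp p -> exists q, vp (p ++ q) /\ forall x, x \in p ++ q.
Proof.
elim: n p => [|n IH] p hn vpp.
  exists [::]; rewrite cats0; split => // x; apply/negPn/negP => xp.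
  have : size (x :: p) <= #|T|.
    rewrite cardT; apply: uniq_leq_size; first by rewrite /= xp; case: vpp.
    by move=> z _; rewrite mem_enum.
  move: hn; rewrite /=; lia.
case: (pickP (fun x => x \notin p)) => [y0 y0p|allp]; last first.
  exists [::]; rewrite cats0; split => // x; by have := allp x => /= /negbFE.
pose y := [arg max_(y > y0 | y \notin p) key (size p) (label e p (size p) y)].
have [yp ymax] : y \notin p /\ forall y', y' \notin p ->
    key (size p) (label e p (size p) y') <= key (size p) (label e p (size p) y).
  by rewrite /y; case: arg_maxnP => // z zp zm; split => // y' /zm.
have vpr : vp (rcons p y).
  apply: vp_rcons => // y' y'p; apply/negP => /key_prec.
  by rewrite ltnNge ymax.
have : #|T| - size (rcons p y) <= n.
  rewrite size_rcons.
  have : size (y :: p) <= #|T|.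
    rewrite cardT; apply: uniq_leq_size; first by rewrite /= yp; case: vpp.
    by move=> z _; rewrite mem_enum.
  move: hn; rewrite /=; lia.
move=> /(IH _) /(_ vpr) [q [vq allq]].
exists (y :: q); rewrite -cat_rcons; by split.
Qed.

End Cons.

Lemma bwd (T : finType) (e : rel T) : symmetric e -> irreflexive e -> forall v,
  radius_le e (nbhd e v) 2 -> exists s, bfs_ordering e s /\ F_branch_leaf e s v.
Proof.
move=> esym eirr v [u uN Hc].
have evu : e v u by move: uN; rewrite inE.
have uv : u != v by apply: contraTneq evu => ->; rewrite eirr.
set ws := enum [set y | e u y && (y != v)].
have wsP : forall y, (y \in ws) = e u y && (y != v) by move=> y; rewrite mem_enum inE.
set p0 := rcons (u :: ws) v.
have vp0 : vp e p0.
  split.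
    rewrite rcons_uniq /= wsP eirr inE negb_or eq_sym uv /= wsP eqxx andbF /=.
    by rewrite /ws enum_uniq.
  move=> [|i] ip y _; first by rewrite /label.
  have hn : e u (nth y p0 i.+1).
    have : nth y p0 i.+1 \in rcons ws v by rewrite /p0 /= mem_nth // -ltnS -(size_rcons (u :: ws) v).
    by rewrite mem_rcons inE => /orP [/eqP ->|]; [rewrite esym|rewrite wsP => /andP []].
  rewrite /label /= hn /=; case: (e u y) => //; by case: [seq j <- iota 1 i | e (nth y p0 j) y].
have [q [vq allq]] := vp_ext (n := #|T|) (leq_subr _ _) vp0.
set s := p0 ++ q.
have Es : s = u :: ws ++ v :: q by rewrite /s /p0 -cats1 /= -catA.
exists s; split; first exact: vp_bfs vq allq.
have us : uniq s by case: vq.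
have hd : forall a, head a s = u by move=> a; rewrite Es.
have fv : find (e v) s = 0 by rewrite Es /= evu.
split; first by rewrite hd eq_sym.
apply/eqP/cards1P; exists u; apply/setP => w; rewrite !inE /ftree_edge /leftmost_nbr !hd fv.
have n0 : nth v s 0 = u by rewrite Es.
rewrite n0 (eq_sym v u) uv (eq_sym u w) /=.
case: (w =P u) => [->|/eqP wu] //=; apply/negP => /eqP hw.
have ks : find (e w) s < size s.
  rewrite ltnNge; apply/negP => ks; move: hw; rewrite nth_default // => wv.
  by move: ks; rewrite wv fv Es.
have ewv : e w v by rewrite -hw; apply: nth_find; rewrite has_find.
have iv : index v s = find (e w) s by rewrite -hw index_uniq.
have ivs : index v s = (size ws).+1.
  rewrite Es /= (negbTE uv) index_cat.
  have -> : (v \in ws) = false by rewrite wsP eqxx andbF.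
  by rewrite /= eqxx addn0.
have /Hc [pp [ppath plast pall psz]] : w \in nbhd e v by rewrite inE esym.
case: pp ppath plast pall psz => [|b [|w' [|? ?]]] //=.
- by move=> _ wu'; move: wu; rewrite -wu' eqxx.
- move=> /andP [eub _] bw _ _; subst w.
  move: hw; rewrite Es /= (esym b u) eub /= => /eqP; by rewrite (negbTE uv).
- move=> /and3P [eub ebw _] ww /and3P [bN _ _] _; subst w.
  have evb : e v b by move: bN; rewrite inE.
  have bws : b \in ws by rewrite wsP eub /=; apply: contraTneq evb => ->; rewrite eirr.
  have bs : b \in s by rewrite Es inE mem_cat bws orbT.
  have : find (e w') s <= index b s.
    apply: (@find_le _ _ _ b); first by rewrite index_mem.
    by rewrite nth_index // esym.
  rewrite -iv ivs Es /= ifN; last by apply: contraTneq eub => <-; rewrite eirr.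
  by rewrite index_cat bws ltnS leqNgt index_mem bws.
Qed.

Theorem theorem13 (T : finType) (e : rel T) :
  simple_graph e -> connected_graph e -> chordal e -> 1 < #|T| ->
  forall v : T,
    (exists s : seq T, bfs_ordering e s /\ F_branch_leaf e s v) <->
    radius_le e (nbhd e v) 2.
Proof.
move=> [esym eirr] conn ch _ v; split; last exact: bwd.
move=> [s [bfs [vh card1]]].
apply: (fwd esym eirr conn bfs ch vh).
exact: (leaf_of_card esym conn bfs vh card1).
Qed.
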